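(* For every odd prime $p$, there exists a finite solvable group $G$ with $\sigma_2(G)=1+p^2+p^3+p^4$.
   Context: A 2-covering of a finite group $G$ is a set of proper subgroups of $G$ such that every pair of elements of $G$ is contained in at least one subgroup in the set. A finite group admits a 2-covering if and only if it cannot be generated by two elements. For such $G$, $\sigma_2(G)$ (the 2-covering number) denotes the smallest size of a 2-covering of $G$. *)

(* Defs.v *)
From mathcomp Require Import all_boot all_fingroup all_solvable.
Set Implicit Arguments. Unset Strict Implicit. Unset Printing Implicit Defensive.
Local Open Scope group_scope.

Definition two_covering (gT : finGroupType) (G : {group gT})
    (C : {set {group gT}}) : Prop :=
  (forall H : {group gT}, H \in C -> H \proper G) /\
  (forall x y : gT, x \in G -> y \in G ->
     exists2 H : {group gT}, H \in C & (x \in H) && (y \in H)).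

Definition sigma2_is (gT : finGroupType) (G : {group gT}) (n : nat) : Prop :=
  (exists C : {set {group gT}}, two_covering G C /\ #|C| = n) /\
  (forall C : {set {group gT}}, two_covering G C -> n <= #|C|).

(* Main.v *)
Require Import Defs.
From mathcomp Require Import all_boot all_fingroup all_solvable.
From HB Require Import structures.
From mathcomp Require Import all_algebra all_field.
From mathcomp Require Import ring zify.
Set Implicit Arguments. Unset Strict Implicit. Unset Printing Implicit Defensive.
Import GRing.Theory.
Local Open Scope ring_scope.

Section Q8.
Variable F : finFieldType.
Variables a b : F.

Definition mx2 (x y z t : F) : 'M[F]_2 :=
  \matrix_(i < 2, j < 2) nth 0 (nth [::] [:: [:: x; y]; [:: z; t]] i) j.

Definition Ii := mx2 0 (-1) 1 0.
Definition Jj := mx2 a b b (-a).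
Definition Kk := mx2 (-b) a a b.
Definition E4 : {set 'M[F]_2} := [set 1%:M; Ii; Jj; Kk].
Definition S2 : {set F} := [set 1; -1].
Definition Q8 : {set 'M[F]_2} := [set s *: e | s in S2, e in E4].
Definition Qset : {set 'M[F]_2} :=
  if a ^+ 2 + b ^+ 2 == -1 then Q8 else [set 1%:M].

Lemma Qset1 : 1%:M \in Qset.
Proof.
rewrite /Qset; case: ifP => _; last by rewrite inE.
by apply/imset2P; exists 1 1%:M; rewrite ?scale1r // !inE eqxx.
Qed.

Section Hab.
Hypothesis hab : a ^+ 2 + b ^+ 2 = -1.

Lemma hab0 : a * a + b * b + 1 = 0.
Proof. by rewrite -!expr2 hab addNr. Qed.

Ltac fin_ring_1 :=
  first [ ring | (apply: (@subr0_eq _ _ _);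
    first [ transitivity (a * a + b * b + 1); [ring | exact: hab0]
          | transitivity (- (a * a + b * b + 1)); [ring | by rewrite hab0 oppr0]])].

Ltac mxeq_1 := apply/matrixP; case=> [[|[|//]] ?]; case=> [[|[|//]] ?];
  rewrite !mxE ?big_ord_recl ?big_ord0 /= ?mxE /=; fin_ring_1.

Lemma QsetE : Qset = Q8.
Proof. by rewrite /Qset hab eqxx. Qed.

Lemma inQ8 s e A : s \in S2 -> e \in E4 -> A = s *: e -> A \in Q8.
Proof. by move=> hs he ->; apply/imset2P; exists s e. Qed.

Ltac solveQ8_1 :=
  first [ apply: (@inQ8 1 1%:M) ; [by rewrite !inE eqxx ?orbT | by rewrite !inE eqxx ?orbT | mxeq_1]
        | apply: (@inQ8 1 Ii) ; [by rewrite !inE eqxx ?orbT | by rewrite !inE eqxx ?orbT | mxeq_1]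
        | apply: (@inQ8 1 Jj) ; [by rewrite !inE eqxx ?orbT | by rewrite !inE eqxx ?orbT | mxeq_1]
        | apply: (@inQ8 1 Kk) ; [by rewrite !inE eqxx ?orbT | by rewrite !inE eqxx ?orbT | mxeq_1]
        | apply: (@inQ8 (-1) 1%:M) ; [by rewrite !inE eqxx ?orbT | by rewrite !inE eqxx ?orbT | mxeq_1]
        | apply: (@inQ8 (-1) Ii) ; [by rewrite !inE eqxx ?orbT | by rewrite !inE eqxx ?orbT | mxeq_1]
        | apply: (@inQ8 (-1) Jj) ; [by rewrite !inE eqxx ?orbT | by rewrite !inE eqxx ?orbT | mxeq_1]
        | apply: (@inQ8 (-1) Kk) ; [by rewrite !inE eqxx ?orbT | by rewrite !inE eqxx ?orbT | mxeq_1] ].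

Lemma E4M e e' : e \in E4 -> e' \in E4 -> e *m e' \in Q8.
Proof.
rewrite !inE => /orP[/orP[/orP[]|]|] /eqP -> /orP[/orP[/orP[]|]|] /eqP ->; solveQ8_1.
Qed.


Lemma S2M s t : s \in S2 -> t \in S2 -> s * t \in S2.
Proof.
rewrite !inE => /orP[]/eqP-> /orP[]/eqP->;
by rewrite ?mul1r ?mulr1 ?mulrNN ?mulr1 ?eqxx ?orbT.
Qed.

Lemma S2sq s : s \in S2 -> s * s = 1.
Proof. by rewrite !inE => /orP[]/eqP->; rewrite ?mulr1 ?mulrNN ?mulr1. Qed.

Lemma Q8M A B : A \in Q8 -> B \in Q8 -> A *m B \in Q8.
Proof.
case/imset2P => s e hs he -> /imset2P [t e' ht he' ->].
rewrite -scalemxAl -scalemxAr scalerA.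
case/imset2P: (E4M he he') => u e'' hu he'' ->.
rewrite scalerA; apply/imset2P; exists (s * t * u) e'' => //.
by rewrite !S2M.
Qed.

Lemma E4sq e : e \in E4 -> e = 1%:M \/ e *m e = - 1%:M.
Proof.
rewrite !inE => /orP[/orP[/orP[]|]|] /eqP ->; first by left.
all: right; mxeq_1.
Qed.

Lemma Q8sq A : A \in Q8 -> [\/ A = 1%:M, A = - 1%:M | A *m A = - 1%:M].
Proof.
case/imset2P => s e hs he ->.
case: (E4sq he) => [->|hee].
  move: hs; rewrite !inE => /orP[]/eqP->; rewrite ?scale1r; first by constructor 1.
  by constructor 2; rewrite scaleN1r.
constructor 3; rewrite -scalemxAl -scalemxAr scalerA S2sq // scale1r hee //.
Qed.

Lemma E4comm e e' : e \in E4 -> e' \in E4 ->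
  e *m e' = e' *m e \/ e *m e' = - (e' *m e).
Proof.
rewrite !inE => /orP[/orP[/orP[]|]|] /eqP -> /orP[/orP[/orP[]|]|] /eqP ->;
first [ by left; mxeq_1 | by right; mxeq_1 ].
Qed.

Lemma Q8comm A B : A \in Q8 -> B \in Q8 ->
  A *m B = B *m A \/ A *m B = - (B *m A).
Proof.
case/imset2P => s e hs he -> /imset2P [t e' ht he' ->].
rewrite -!scalemxAl -!scalemxAr !scalerA [t * s]mulrC.
case: (E4comm he he') => ->; [left | right]; by rewrite ?scalerN.
Qed.

Lemma Q8_4 A : A \in Q8 -> A *m (A *m A *m A) = 1%:M.
Proof.
move=> H.
have hAA : A *m A = 1%:M \/ A *m A = - 1%:M.
  case/Q8sq: H => [->|->|h]; [left|left|by right]; first by rewrite mul1mx.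
  by rewrite mulNmx mulmxN mul1mx opprK.
rewrite !mulmxA -[A *m A *m A *m A]mulmxA.
by case: hAA => ->; rewrite ?mul1mx // mulNmx mulmxN mul1mx opprK.
Qed.

Lemma Q8unit A : A \in Q8 -> A \in unitmx.
Proof. by move/Q8_4/mulmx1_unit => []. Qed.

Lemma Q8inv A : A \in Q8 -> invmx A \in Q8.
Proof.
move=> hA; have -> : invmx A = A *m A *m A.
  by rewrite -[invmx A]mulmx1 -(Q8_4 hA) [invmx A *m _]mulmxA mulVmx ?Q8unit // mul1mx.
by rewrite !Q8M.
Qed.

Lemma Ii_Q8 : Ii \in Q8.
Proof. by apply: (@inQ8 1 Ii); rewrite ?scale1r // !inE eqxx ?orbT. Qed.
Lemma Jj_Q8 : Jj \in Q8.
Proof. by apply: (@inQ8 1 Jj); rewrite ?scale1r // !inE eqxx ?orbT. Qed.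
Lemma IiIi : Ii *m Ii = - 1%:M. Proof. mxeq_1. Qed.
Lemma IiJj : Ii *m Jj = Kk. Proof. mxeq_1. Qed.
Lemma Ii_neq1 : Ii != 1%:M.
Proof. apply/eqP => /matrixP /(_ 0 0); rewrite !mxE /= => /eqP; by rewrite eq_sym oner_eq0. Qed.

End Hab.
End Q8.

Section Grp.
Variable F : finFieldType.
Variables a b : F.

Lemma QsetM A B : A \in Qset a b -> B \in Qset a b -> A *m B \in Qset a b.
Proof.
rewrite /Qset; case: ifP => [/eqP hab|_]; first exact: Q8M.
by rewrite !inE => /eqP-> /eqP->; rewrite mul1mx.
Qed.

Lemma QsetU A : A \in Qset a b -> A \in unitmx.
Proof.
rewrite /Qset; case: ifP => [/eqP hab|_]; first exact: Q8unit.
by rewrite !inE => /eqP->; rewrite unitmx1.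
Qed.

Lemma QsetV A : A \in Qset a b -> invmx A \in Qset a b.
Proof.
rewrite /Qset; case: ifP => [/eqP hab|_]; first exact: Q8inv.
by rewrite !inE => /eqP->; rewrite invmx1.
Qed.

Definition T := {x : 'M[F]_2 * 'M[F]_(2,3) | x.1 \in Qset a b}.
HB.instance Definition _ := Finite.on T.
Definition tmul (x y : T) : T :=
  @exist _ _ ((val x).1 *m (val y).1, (val x).1 *m (val y).2 + (val x).2)
    (QsetM (valP x) (valP y)).
Definition tone : T := @exist _ _ (1%:M, 0) (Qset1 a b).
Definition tinv (x : T) : T :=
  @exist _ _ (invmx (val x).1, - (invmx (val x).1 *m (val x).2)) (QsetV (valP x)).
Lemma tmulA : associative tmul.
Proof.
move=> [[A B] hA] [[C D] hC] [[E G] hE]; apply: val_inj => /=.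
by rewrite mulmxA mulmxDr mulmxA addrA.
Qed.
Lemma tmul1 : left_id tone tmul.
Proof. move=> [[A B] hA]; apply: val_inj => /=. by rewrite !mul1mx addr0. Qed.
Lemma tmulV : left_inverse tone tinv tmul.
Proof. move=> [[A B] hA]; apply: val_inj => /=. by rewrite mulVmx ?QsetU // subrr. Qed.
HB.instance Definition _ := Finite_isGroup.Build T tmulA tmul1 tmulV.

Lemma valM (x y : T) : val (x * y)%g = ((val x).1 *m (val y).1, (val x).1 *m (val y).2 + (val x).2).
Proof. by []. Qed.
Lemma valV (x : T) : val (x^-1)%g = (invmx (val x).1, - (invmx (val x).1 *m (val x).2)).
Proof. by []. Qed.
Lemma val1 : val (1 : T)%g = (1%:M, 0).
Proof. by []. Qed.

End Grp.

Section Main.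
Variable F : finFieldType.
Variables a b : F.
Hypothesis hab : a ^+ 2 + b ^+ 2 = -1.
Hypothesis h2 : (2 : F) != 0.
Hypothesis hnat : forall x : F, exists n : nat, x = n%:R.

Local Notation T := (T a b).

Lemma qI : Ii F \in Qset a b. Proof. by rewrite QsetE // Ii_Q8. Qed.
Lemma qJ : Jj a b \in Qset a b. Proof. by rewrite QsetE // Jj_Q8. Qed.

Definition mkT A B (h : A \in Qset a b) : T := @exist _ _ (A, B) h.
Definition mk1 B : T := mkT B (Qset1 a b).

Definition Nset : {set T} := [set x : T | (val x).1 == 1%:M].
Lemma Nset_group : group_set Nset.
Proof.
apply/group_setP; split; first by rewrite inE val1.
by move=> x y; rewrite !inE valM /= => /eqP-> /eqP->; rewrite mul1mx.
Qed.
Canonical Ngrp := Group Nset_group.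

Definition Mset (c : 'cV[F]_3) (w : 'cV[F]_2) : {set T} :=
  [set x : T | (val x).2 *m c == ((val x).1 - 1%:M) *m w].
Lemma Mset_group c w : group_set (Mset c w).
Proof.
apply/group_setP; split; first by rewrite inE val1 /= mul0mx subrr mul0mx.
move=> x y; rewrite !inE valM /= => /eqP hx /eqP hy.
by rewrite mulmxDl -mulmxA hy hx mulmxA -mulmxDl mulmxBr mulmx1 addrA subrK.
Qed.
Canonical Mgrp c w := Group (Mset_group c w).

Lemma inMset (x : T) c w : (x \in Mset c w) = ((val x).2 *m c == ((val x).1 - 1%:M) *m w).
Proof. by rewrite inE. Qed.

Lemma two_inv m n (M : 'M[F]_(m, n)) : 2^-1 *: (M + M) = M.
Proof. by rewrite -mulr2n -scaler_nat scalerA mulVf // scale1r. Qed.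

Lemma fpf A : A \in Qset a b -> A != 1%:M ->
  exists V, V *m (A - 1%:M) = 1%:M /\ (A - 1%:M) *m V = 1%:M.
Proof.
rewrite (QsetE hab) => hA nA1.
have h2u : (2 : F) \is a GRing.unit by rewrite unitfE.
case/(Q8sq hab): hA => [hA|->|hAA]; first by rewrite hA eqxx in nA1.
  exists (- (2^-1) *: 1%:M); rewrite -scalemxAl -scalemxAr mul1mx mulmx1.
  by rewrite -opprD scaleNr scalerN opprK two_inv.
exists (- (2^-1) *: (A + 1%:M)); rewrite -scalemxAl -scalemxAr.
have -> : (A + 1%:M) *m (A - 1%:M) = - (1%:M + 1%:M).
  by rewrite mulmxDl mulmxBr hAA mul1mx mulmx1 addrA subrK -opprD.
have -> : (A - 1%:M) *m (A + 1%:M) = - (1%:M + 1%:M).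
  by rewrite mulmxDr mulmxBl hAA mul1mx mulmx1 addrA subrK -opprD.
by rewrite scaleNr scalerN opprK two_inv.
Qed.

End Main.

Section LinAlg.
Variable F : finFieldType.

Lemma ker3 m (A : 'M[F]_(m, 3)) : (\rank A < 3)%N ->
  exists c : 'cV[F]_3, c != 0 /\ A *m c = 0.
Proof.
move=> hr; set K := kermx A^T.
have hK : (0 < \rank K)%N by rewrite mxrank_ker mxrank_tr subn_gt0.
have [i hi] : exists i, row i K != 0.
  apply/existsP; apply: contraTT hK; rewrite negb_exists => /forallP hz.
  suff -> : K = 0 by rewrite mxrank0.
  by apply/row_matrixP => i; rewrite row0; apply/eqP; move: (hz i); rewrite negbK.
exists (row i K)^T; split; first by rewrite trmx_eq0.
by rewrite -[A in A *m _]trmxK -trmx_mul -row_mul mulmx_ker row0 trmx0.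
Qed.

Lemma dual3 (S : {set 'rV[F]_3}) :
  (forall r s, r \in S -> s \in S -> r + s \in S) ->
  (forall k r, r \in S -> k *: r \in S) -> 0 \in S ->
  (exists r, r \notin S) ->
  exists c : 'cV[F]_3, c != 0 /\ (forall r, r \in S -> r *m c = 0).
Proof.
move=> SD SZ S0 [r0 hr0].
set R := (\sum_(r in S) <<r>>)%MS.
have hRS r : r \in S -> (r <= R)%MS by move=> hr; apply: (@sumsmx_sup F _ r) => //; rewrite genmxE.
have [full|nfull] := boolP (row_full R).
  have := submx_full r0 full; case/sub_sumsmxP => u hu.
  suff hin : r0 \in S by rewrite hin in hr0.
  rewrite hu.
  apply: (big_ind (fun x => x \in S)) => // r hr.
  have : (u r *m <<r>> <= r)%MS by apply: submx_trans (submxMl _ _) _; rewrite genmxE.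
  by case/submxP => D ->; rewrite [D]mx11_scalar mul_scalar_mx SZ.
have hr : (\rank R < 3)%N by rewrite ltn_neqAle rank_leq_row andbT.
have [c [c0 hc]] := ker3 hr; exists c; split => // r /hRS /submxP [D ->].
by rewrite -mulmxA hc mulmx0.
Qed.

End LinAlg.

Section Vec.
Variable F : finFieldType.

Definition v3 (x y z : F) : 'cV[F]_3 := \col_(i < 3) nth 0 [:: x; y; z] i.
Definition r3 (x y z : F) : 'rV[F]_3 := \row_(i < 3) nth 0 [:: x; y; z] i.
Definition m23 (x0 x1 x2 y0 y1 y2 : F) : 'M[F]_(2,3) :=
  \matrix_(i < 2, j < 3) nth 0 (nth [::] [:: [:: x0; x1; x2]; [:: y0; y1; y2]] i) j.

Ltac mxe_5 := apply/matrixP; case=> [[|[|[|?]]] ?] //; case=> [[|[|[|?]]] ?] //;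
  do 3 (rewrite ?mxE ?big_ord_recl ?big_ord0 /=).

Ltac lin_5 e := let t := type of e in match t with ?E = 0 =>
  (apply: subr0_eq; first [ transitivity E; [ring | exact: e]
                          | transitivity (-E); [ring | by rewrite e oppr0]]) end.

Lemma v3_eta (c : 'cV[F]_3) : c = v3 (c 0 0) (c 1 0) (c 2 0).
Proof.
apply/matrixP; case=> [[|[|[|?]]] ?] //; case=> [[|?] ?] //; rewrite !mxE /=;
 congr (c _ _); exact: val_inj.
Qed.

Lemma v3_inj x y z x' y' z' : v3 x y z = v3 x' y' z' -> [/\ x = x', y = y' & z = z'].
Proof.
move/matrixP => h; move: (h 0 0) (h 1 0) (h 2 0); rewrite !mxE /=; by [].
Qed.

Lemma v3_scale k x y z : k *: v3 x y z = v3 (k * x) (k * y) (k * z).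
Proof. mxe_5; by []. Qed.

Lemma v3_0 : 0 = v3 0 0 0 :> 'cV[F]_3.
Proof. by mxe_5. Qed.

Definition Cn := option ((F * F) + F)%type.
Definition vec (n : Cn) : 'cV[F]_3 :=
  match n with Some (inl (x, y)) => v3 1 x y | Some (inr y) => v3 0 1 y | None => v3 0 0 1 end.
Definition rr (n : Cn) : 'rV[F]_3 :=
  match n with Some (inl _) => r3 1 0 0 | Some (inr _) => r3 0 1 0 | None => r3 0 0 1 end.
Definition DD (n : Cn) : 'M[F]_(2,3) :=
  match n with Some (inl (x, y)) => m23 (-x) 1 0 (-y) 0 1
  | Some (inr y) => m23 1 0 0 0 (-y) 1 | None => m23 1 0 0 0 1 0 end.


Lemma rr_vec (n : Cn) : rr n *m vec n = 1%:M :> 'M[F]_1.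
Proof. case: n => [[[x y]|y]|]; mxe_5; ring. Qed.

Lemma DD_vec (n : Cn) : DD n *m vec n = 0.
Proof. case: n => [[[x y]|y]|]; mxe_5; ring. Qed.

Lemma DD_ker (n : Cn) (c : 'cV[F]_3) : DD n *m c = 0 -> c = vec n *m (rr n *m c).
Proof.
rewrite [c]v3_eta; move: (c 0 0) (c 1 0) (c 2 0) => x0 x1 x2.
case: n => [[[x y]|y]|] /=;
move/matrixP => h; move: (h 0 0) (h 1 0); do 3 (rewrite ?mxE ?big_ord_recl ?big_ord0 /=); move=> e0 e1; mxe_5.
all: first [ ring | lin_5 e0 | lin_5 e1 ].
Qed.


Lemma vec_scale (n n' : Cn) k : vec n' = k *: vec n -> k = 1 /\ n' = n.
Proof.
case: n => [[[x y]|y]|]; case: n' => [[[x' y']|y']|] /=; rewrite v3_scale;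
case/v3_inj => e0 e1 e2; rewrite ?mulr0 ?mulr1 in e0 e1 e2.
all: try (by move: e0 => /eqP; rewrite oner_eq0).
all: try (by move: e0 => /eqP; rewrite eq_sym oner_eq0).
all: try (by move: e1; rewrite -e0 mul0r => /eqP; rewrite oner_eq0).
all: try (by move: e1 => /eqP; rewrite eq_sym oner_eq0).
all: try (by move: e1 => /eqP; rewrite oner_eq0).
all: try (by move: e2; rewrite -e1 => /eqP; rewrite oner_eq0).
all: try (by move: e2; rewrite -e1 mul0r => /eqP; rewrite oner_eq0).
all: try (by move: e2; rewrite -e0 mul0r => /eqP; rewrite oner_eq0).
all: subst k; split => //; repeat match goal with H : _ = 1 * _ |- _ => rewrite mul1r in H end; by subst.
Qed.

Lemma vec_neq0 (n : Cn) : vec n != 0.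
Proof.
apply/eqP; case: n => [[[x y]|y]|] /=; rewrite v3_0; case/v3_inj => e0 e1 e2;
 match goal with H : 1 = 0 |- _ => by move/eqP: H; rewrite oner_eq0 end.
Qed.

Lemma norm_vec (c : 'cV[F]_3) : c != 0 -> exists n k, k != 0 /\ c = k *: vec n.
Proof.
rewrite [c]v3_eta; move: (c 0 0) (c 1 0) (c 2 0) => x0 x1 x2 hc.
have [h0|h0] := eqVneq x0 0; last first.
  exists (Some (inl (x1 / x0, x2 / x0))), x0; split => //=.
  by rewrite v3_scale; congr v3; field.
have [h1|h1] := eqVneq x1 0; last first.
  exists (Some (inr (x2 / x1))), x1; split => //=.
  by rewrite v3_scale h0; congr v3; field.
have [h2|h2] := eqVneq x2 0.
  by move: hc; rewrite h0 h1 h2 -v3_0 eqxx.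
exists None, x2; split => //=.
by rewrite v3_scale h0 h1; congr v3; field.
Qed.

End Vec.

Section Main2.
Variable F : finFieldType.
Variables a b : F.
Hypothesis hab : a ^+ 2 + b ^+ 2 = -1.
Hypothesis h2 : (2 : F) != 0.
Hypothesis hnat : forall x : F, exists n : nat, x = n%:R.

Local Notation T := (T a b).
Local Notation Mset := (@Mset F a b).
Local Notation Nset := (@Nset F a b).

Lemma Mset_scale c w k : k != 0 -> Mset (k *: c) (k *: w) = Mset c w.
Proof.
move=> hk; apply/setP => x; rewrite !inMset -!scalemxAr.
by rewrite (inj_eq (scalerI hk)).
Qed.

Lemma cover2 (x y : T) : (val x).1 != 1%:M ->
  exists n w, x \in Mset (vec n) w /\ y \in Mset (vec n) w.
Proof.
move=> hx; have [V [hV1 hV2]] := fpf hab h2 (valP x) hx.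
set D := (val y).2 - ((val y).1 - 1%:M) *m V *m (val x).2.
have hr : (\rank D < 3)%N by apply: leq_ltn_trans (rank_leq_row D) _.
have [c [c0 hc]] := ker3 hr.
set w := V *m (val x).2 *m c.
have hxc : x \in Mset c w by rewrite inMset /w !mulmxA hV2 mul1mx.
have hyc : y \in Mset c w.
  rewrite inMset /w; move: hc; rewrite /D mulmxBl => /eqP; rewrite subr_eq0 => /eqP->.
  by rewrite !mulmxA.
have [n [k [k0 ck]]] := norm_vec c0.
exists n, (k^-1 *: w).
have -> : vec n = k^-1 *: c by rewrite ck scalerA mulVf // scale1r.
by rewrite Mset_scale ?invr_eq0.
Qed.

Lemma cover (x y : T) : (x \in Nset /\ y \in Nset) \/
  exists n w, x \in Mset (vec n) w /\ y \in Mset (vec n) w.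
Proof.
have [hx|hx] := eqVneq (val x).1 1%:M; last by right; exact: cover2.
have [hy|hy] := eqVneq (val y).1 1%:M; first by left; rewrite !inE hx hy.
by right; have [n [w [h1 h2']]] := cover2 x hy; exists n, w.
Qed.

End Main2.

Section Main3.
Variable F : finFieldType.
Variables a b : F.
Hypothesis hab : a ^+ 2 + b ^+ 2 = -1.
Hypothesis h2 : (2 : F) != 0.
Hypothesis hnat : forall x : F, exists n : nat, x = n%:R.

Local Notation T := (T a b).
Local Notation Mset := (@Mset F a b).
Local Notation Nset := (@Nset F a b).
Local Notation mk1 := (mk1 a b).

Ltac fin_ring_7 :=
  first [ ring | (apply: (@subr0_eq _ _ _);
    first [ transitivity (a * a + b * b + 1); [ring | exact: hab0 hab]
          | transitivity (- (a * a + b * b + 1)); [ring | by rewrite (hab0 hab) oppr0]])].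

Ltac mxeq_7 := apply/matrixP; case=> [[|[|//]] ?]; case=> [[|[|//]] ?];
  do 3 (rewrite ?mxE ?big_ord_recl ?big_ord0 /=); fin_ring_7.

Definition Uset (K : {set T}) : {set 'M[F]_(2,3)} := [set B | mk1 B \in K].

Section U.
Variable K : {group T}.

Lemma U_sub (x z : T) : x \in K -> z \in K -> (val x).1 = (val z).1 ->
  (val x).2 - (val z).2 \in Uset K.
Proof.
move=> hx hz e; rewrite inE.
suff -> : mk1 ((val x).2 - (val z).2) = (x * z^-1)%g by rewrite groupM ?groupV.
apply: val_inj; rewrite valM valV /= e mulmxV ?(QsetU (valP z)) //.
by rewrite mulmxN mulmxA mulmxV ?(QsetU (valP z)) // mul1mx addrC.
Qed.

Lemma U_act (z : T) B : z \in K -> B \in Uset K -> (val z).1 *m B \in Uset K.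
Proof.
move=> hz; rewrite !inE => hB.
suff -> : mk1 ((val z).1 *m B) = (z * mk1 B * z^-1)%g by rewrite !groupM ?groupV.
apply: val_inj; rewrite !valM valV /= mulmx1 mulmxV ?(QsetU (valP z)) //.
by rewrite mulmxN mulmxA mulmxV ?(QsetU (valP z)) // mul1mx [X in - _ + X]addrC addKr.
Qed.

Lemma U_add B B' : B \in Uset K -> B' \in Uset K -> B + B' \in Uset K.
Proof.
rewrite !inE => h h'.
suff -> : mk1 (B + B') = (mk1 B * mk1 B')%g by rewrite groupM.
by apply: val_inj; rewrite valM /= !mul1mx addrC.
Qed.

Lemma U_opp B : B \in Uset K -> - B \in Uset K.
Proof.
rewrite !inE => h.
suff -> : mk1 (- B) = ((mk1 B)^-1)%g by rewrite groupV.
by apply: val_inj; rewrite valV /= invmx1 mul1mx.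
Qed.

Lemma U_0 : 0 \in Uset K.
Proof.
rewrite inE; suff -> : mk1 0 = 1%g by rewrite group1.
by apply: val_inj.
Qed.

Lemma U_natmul B n : B \in Uset K -> B *+ n \in Uset K.
Proof. by move=> h; elim: n => [|n IH]; rewrite ?mulr0n ?U_0 // mulrS U_add. Qed.

Lemma U_scale k B : B \in Uset K -> k *: B \in Uset K.
Proof. by move=> h; have [n ->] := hnat k; rewrite scaler_nat U_natmul. Qed.

End U.
End Main3.

Section RM.
Variable F : finFieldType.
Definition rm (r s : 'rV[F]_3) : 'M[F]_(2,3) :=
  \matrix_(i < 2, j < 3) if (i : nat) == 0%N then r ord0 j else s ord0 j.
Local Notation o1 := (lift ord0 (@ord0 0)).

Ltac rmx_8 := apply/matrixP; case=> [[|[|?]] ?] ? //; do 3 (rewrite ?mxE ?big_ord_recl ?big_ord0 /=);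
  rewrite ?mul1r ?mul0r ?addr0 ?add0r.

Lemma rm_eta (B : 'M[F]_(2,3)) : B = rm (row ord0 B) (row o1 B).
Proof. by rmx_8; congr (B _ _); apply: val_inj. Qed.
Lemma rm_add r s r' s' : rm r s + rm r' s' = rm (r + r') (s + s').
Proof. by rmx_8. Qed.
Lemma rm_scale k r s : k *: rm r s = rm (k *: r) (k *: s).
Proof. by rmx_8. Qed.
Lemma rm_0 : rm 0 0 = 0.
Proof. by rmx_8. Qed.
Lemma rm_split r s : rm r s = rm r 0 + rm 0 s.
Proof. by rewrite rm_add addr0 add0r. Qed.
Lemma E11_rm B : mx2 1 0 0 0 *m B = rm (row ord0 B) 0.
Proof. by rmx_8. Qed.
Lemma E12_rm B : mx2 0 1 0 0 *m B = rm (row o1 B) 0.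
Proof. by rmx_8. Qed.
Lemma E21_rm r : mx2 0 0 1 0 *m rm r 0 = rm 0 r.
Proof. by rmx_8. Qed.
End RM.

Section Max.
Variable F : finFieldType.
Variables a b : F.
Hypothesis hab : a ^+ 2 + b ^+ 2 = -1.
Hypothesis h2 : (2 : F) != 0.
Hypothesis hnat : forall x : F, exists n : nat, x = n%:R.

Local Notation T := (T a b).
Local Notation Mset := (@Mset F a b).
Local Notation mk1 := (mk1 a b).
Local Notation Uset := (@Uset F a b).
Local Notation o1 := (lift ord0 (@ord0 0)).

Ltac fin_ring_8 :=
  first [ ring | (apply: (@subr0_eq _ _ _);
    first [ transitivity (a * a + b * b + 1); [ring | exact: hab0 hab]
          | transitivity (- (a * a + b * b + 1)); [ring | by rewrite (hab0 hab) oppr0]])].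

Ltac mxeq_8 := apply/matrixP; case=> [[|[|//]] ?]; case=> [[|[|//]] ?];
  do 3 (rewrite ?mxE ?big_ord_recl ?big_ord0 /=); fin_ring_8.

Lemma E11_eq : 2 *: mx2 (1 : F) 0 0 0 = 1%:M + b *: Kk a b - a *: Jj a b.
Proof. mxeq_8. Qed.
Lemma E21_eq : mx2 (0 : F) 0 1 0 = Ii F *m mx2 1 0 0 0.
Proof. mxeq_8. Qed.
Lemma E12_eq : mx2 (0 : F) 1 0 0 = mx2 1 0 0 0 *m - Ii F.
Proof. mxeq_8. Qed.

Variable K : {group T}.
Variables x y : T.
Hypotheses (hx : x \in K) (hy : y \in K) (ex : (val x).1 = Ii F) (ey : (val y).1 = Jj a b).

Lemma U_I B : B \in Uset K -> Ii F *m B \in Uset K.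
Proof. by rewrite -ex; exact: U_act. Qed.
Lemma U_J B : B \in Uset K -> Jj a b *m B \in Uset K.
Proof. by rewrite -ey; exact: U_act. Qed.
Lemma U_K B : B \in Uset K -> Kk a b *m B \in Uset K.
Proof. by move=> h; rewrite -IiJj -mulmxA U_I ?U_J. Qed.

Lemma U_E11 B : B \in Uset K -> mx2 1 0 0 0 *m B \in Uset K.
Proof.
move=> h.
have -> : mx2 (1 : F) 0 0 0 = 2^-1 *: (1%:M + b *: Kk a b - a *: Jj a b).
  by rewrite -E11_eq scalerA mulVf // scale1r.
rewrite -scalemxAl mulmxBl mulmxDl mul1mx -!scalemxAl.
by apply: U_scale => //; apply: U_add; [apply: U_add | apply: U_opp];
  rewrite // U_scale // ?U_K ?U_J.
Qed.
Lemma U_E21 B : B \in Uset K -> mx2 0 0 1 0 *m B \in Uset K.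
Proof. by move=> h; rewrite E21_eq -mulmxA U_I // U_E11. Qed.
Lemma U_E12 B : B \in Uset K -> mx2 0 1 0 0 *m B \in Uset K.
Proof. by move=> h; rewrite E12_eq -mulmxA U_E11 // mulNmx U_opp // U_I. Qed.

Lemma fullK A : A \in Qset a b -> exists2 z, z \in K & (val z).1 = A.
Proof.
move=> hA; have : A \in Q8 a b by rewrite -(QsetE hab).
case/imset2P => s e hs he ->.
have base : exists2 z, z \in K & (val z).1 = e.
  move: he; rewrite !inE => /orP[/orP[/orP[]|]|] /eqP ->.
  - by exists 1%g; rewrite ?group1.
  - by exists x.
  - by exists y.
  - by exists (x * y)%g; rewrite ?groupM // valM ex ey IiJj.
case: base => z hz ez.
move: hs; rewrite !inE => /orP[]/eqP->; first by exists z; rewrite // scale1r.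
exists (x * x * z)%g; first by rewrite !groupM.
by rewrite !valM /= ex IiIi ez mulNmx mul1mx scaleN1r.
Qed.

End Max.

Lemma zid (V : zmodType) (X Y Z : V) : X + Y - (- Y + Z) = Y + Y - (Z - X).
Proof. by rewrite opprD opprK opprB [RHS]addrACA [Y + X]addrC. Qed.

Section Max2.
Variable F : finFieldType.
Variables a b : F.
Hypothesis hab : a ^+ 2 + b ^+ 2 = -1.
Hypothesis h2 : (2 : F) != 0.
Hypothesis hnat : forall x : F, exists n : nat, x = n%:R.

Local Notation T := (T a b).
Local Notation Mset := (@Mset F a b).
Local Notation mk1 := (mk1 a b).
Local Notation Uset := (@Uset F a b).
Local Notation o1 := (lift ord0 (@ord0 0)).

Lemma maxK (K : {group T}) (x y : T) : x \in K -> y \in K ->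
  (val x).1 = Ii F -> (val y).1 = Jj a b ->
  K = [set: T] :> {set T} \/ exists c w, c != 0 /\ K \subset Mset c w.
Proof.
move=> hx hy ex ey.
set U := Uset K.
set U1 := [set r : 'rV[F]_3 | rm r 0 \in U].
have U1E : forall r, (r \in U1) = (rm r 0 \in U) by move=> r; rewrite /U1 in_set.
have U1D : forall r s, r \in U1 -> s \in U1 -> r + s \in U1.
  move=> r s; rewrite !U1E => hr hs.
  have -> : rm (r + s) 0 = rm r 0 + rm s 0 by rewrite rm_add addr0.
  exact: U_add.
have U1Z : forall k r, r \in U1 -> k *: r \in U1.
  move=> k r; rewrite !U1E => hr.
  have -> : rm (k *: r) 0 = k *: rm r 0 by rewrite rm_scale scaler0.
  exact: U_scale.
have U10 : 0 \in U1 by rewrite U1E rm_0 U_0.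
have [hall | [r0 hr0]] : (forall r, r \in U1) \/ exists r, r \notin U1.
  case: (pickP [pred r | r \notin U1]) => [r hr|h]; first by right; exists r.
  by left => r; move: (h r) => /= /negbFE.
  left.
  have hU : forall B, B \in U.
    move=> B; rewrite [B]rm_eta rm_split -E21_rm.
    apply: U_add; first by move: (hall (row ord0 B)); rewrite U1E.
    by apply: (U_E21 hab h2 hnat hx hy ex ey); move: (hall (row o1 B)); rewrite U1E.
  apply/setP => z; rewrite inE.
  have [z' hz' ez'] := fullK hab hx hy ex ey (valP z).
  have -> : z = (mk1 ((val z).2 - (val z').2) * z')%g.
    apply: val_inj; rewrite valM /= !mul1mx ez' addrC subrK.
    by clear; case: z => [[? ?] ?].
  by apply/idP; apply: groupM => //; move: (hU ((val z).2 - (val z').2)); rewrite inE.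
have [c [c0 hc]] := dual3 U1D U1Z U10 (ex_intro _ r0 hr0).
right.
have hUc : forall B, B \in U -> B *m c = 0.
  move=> B hB.
  have h0 : row ord0 B \in U1 by rewrite U1E -E11_rm (U_E11 hab h2 hnat hx hy ex ey).
  have h1 : row o1 B \in U1 by rewrite U1E -E12_rm (U_E12 hab h2 hnat hx hy ex ey).
  apply/row_matrixP; case=> [[|[|?]] ?] //; rewrite row_mul row0.
    by rewrite (_ : Ordinal _ = ord0); [exact: hc | exact: val_inj].
  by rewrite (_ : Ordinal _ = o1); [exact: hc | exact: val_inj].
set z0 := (x * x)%g.
have hz0 : z0 \in K by rewrite groupM.
have ez0 : (val z0).1 = - 1%:M by rewrite valM ex IiIi.
exists c, (- (2^-1) *: ((val z0).2 *m c)); split => //.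
apply/subsetP => z hz; rewrite inMset.
have hd := U_sub (groupM hz hz0) (groupM hz0 hz).
rewrite !valM ez0 mulmxN mulNmx mulmx1 mul1mx in hd.
have := hUc _ (hd erefl).
move: ((val z).1) ((val z).2) ((val z0).2) => A Bz B0 /=.
rewrite mulNmx mul1mx !mulmxBl !mulmxDl mulNmx -mulmxA zid.
move: (B0 *m c) (Bz *m c) => u v /subr0_eq e.
rewrite ?mulmxBl ?mul1mx -!scalemxAr -scalerBr -[v in v == _](two_inv h2) e.
by rewrite scaleNr -scalerN opprB.
Qed.

End Max2.

Section Pairs.
Variable F : finFieldType.
Variables a b : F.
Hypothesis hab : a ^+ 2 + b ^+ 2 = -1.
Hypothesis h2 : (2 : F) != 0.
Hypothesis hnat : forall x : F, exists n : nat, x = n%:R.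

Local Notation T := (T a b).
Local Notation Mset := (@Mset F a b).
Local Notation Nset := (@Nset F a b).
Local Notation mk1 := (mk1 a b).

Definition pairM (n : Cn F) (w : 'cV[F]_2) : T * T :=
  (mkT ((Ii F - 1%:M) *m w *m rr n) (qI hab),
   mkT ((Jj a b - 1%:M) *m w *m rr n + DD n) (qJ hab)).

Lemma pairM_in n w : (pairM n w).1 \in Mset (vec n) w /\ (pairM n w).2 \in Mset (vec n) w.
Proof.
split; rewrite inMset /=; first by rewrite -mulmxA rr_vec mulmx1.
by rewrite mulmxDl DD_vec addr0 -mulmxA rr_vec mulmx1.
Qed.

Lemma UQ n w c' w' : (pairM n w).1 \in Mset c' w' -> (pairM n w).2 \in Mset c' w' ->
  exists k, c' = k *: vec n /\ w' = k *: w.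
Proof.
rewrite !inMset /= => /eqP hx /eqP hy.
set mu := rr n *m c'.
set k := mu 0 0.
have hmu : mu = k%:M by apply: mx11_scalar.
exists k.
have [V [hV _]] := fpf hab h2 (qI hab) (Ii_neq1 F).
have ew : w' = k *: w.
  move: hx; rewrite -!mulmxA -/mu hmu mul_mx_scalar => /(congr1 (mulmx V)).
  by rewrite !mulmxA hV !mul1mx => ->.
split => //.
move: hy; rewrite mulmxDl -!mulmxA -/mu hmu mul_mx_scalar ew => /eqP.
rewrite -subr_eq0 addrC addKr => /eqP /DD_ker ->.
by rewrite -/mu hmu mul_mx_scalar.
Qed.

Lemma Minj n w n' w' : Mset (vec n) w = Mset (vec n') w' -> n = n' /\ w = w'.
Proof.
move=> e; have [h1 h2'] := pairM_in n w.
rewrite e in h1 h2'; have [k [ck wk]] := UQ h1 h2'.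
have [k1 nn] := vec_scale ck.
by split => //; rewrite wk k1 scale1r.
Qed.

Definition x0 : T := mk1 (m23 1 0 0 0 1 0).
Definition y0 : T := mk1 (m23 0 0 1 0 0 0).

Lemma pair0 c w : x0 \in Mset c w -> y0 \in Mset c w -> c = 0.
Proof.
rewrite !inMset /= subrr !mul0mx => /eqP hx /eqP hy.
rewrite [c]v3_eta; move: hx hy; rewrite [c]v3_eta.
move: (c 0 0) (c 1 0) (c 2 0) => c0 c1 c2 /matrixP hx /matrixP hy.
move: (hx 0 0) (hx 1 0) (hy 0 0).
do 3 (rewrite ?mxE ?big_ord_recl ?big_ord0 /=).
rewrite !mul1r !mul0r !add0r !addr0 => -> -> ->.
by rewrite -v3_0.
Qed.

End Pairs.

Section Props.
Variable F : finFieldType.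
Variables a b : F.
Hypothesis hab : a ^+ 2 + b ^+ 2 = -1.

Local Notation T := (T a b).
Local Notation Mset := (@Mset F a b).
Local Notation Nset := (@Nset F a b).
Local Notation mk1 := (mk1 a b).

Definition e0 : 'cV[F]_2 := delta_mx 0 0.
Lemma e0_neq0 : e0 != 0.
Proof. by apply/eqP => /matrixP /(_ 0 0); rewrite !mxE eqxx /= => /eqP; rewrite oner_eq0. Qed.

Definition tB (n : Cn F) : T := mk1 (e0 *m rr n).
Lemma tB_N n : tB n \in Nset. Proof. by rewrite inE. Qed.
Lemma tB_M n w : tB n \notin Mset (vec n) w.
Proof. by rewrite inMset /= subrr mul0mx -mulmxA rr_vec mulmx1 e0_neq0. Qed.

Lemma N_proper : Nset != [set: T].
Proof.
apply/eqP => /setP /(_ (mkT 0 (qI hab))); rewrite !inE /= => /eqP.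
by apply/eqP; exact: Ii_neq1.
Qed.

Lemma M_proper n w : Mset (vec n) w != [set: T].
Proof. by apply/eqP => /setP /(_ (tB n)); rewrite in_setT (negbTE (tB_M n w)). Qed.

Lemma N_neq_M n w : Nset != Mset (vec n) w.
Proof. by apply/eqP => /setP /(_ (tB n)); rewrite tB_N (negbTE (tB_M n w)). Qed.

Definition Zset : {set T} := [set z : T | ((val z).1 == 1%:M) || ((val z).1 == - 1%:M)].
Lemma Zset_group : group_set Zset.
Proof.
apply/group_setP; split; first by rewrite inE val1 eqxx.
move=> x y; rewrite !inE valM /= => /orP[]/eqP-> /orP[]/eqP->;
by rewrite ?mul1mx ?mulNmx ?mul1mx ?opprK ?eqxx ?orbT.
Qed.
Canonical Zgrp := Group Zset_group.

Lemma valR (x y : T) : (val [~ x, y]%g).1 =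
  invmx (val x).1 *m (invmx (val y).1 *m ((val x).1 *m (val y).1)).
Proof. by []. Qed.

Lemma invQP (P Q : 'M[F]_2) : P \in unitmx -> Q \in unitmx ->
  invmx P *m (invmx Q *m (Q *m P)) = 1%:M.
Proof. by move=> uP uQ; rewrite (mulmxA (invmx Q)) mulVmx // mul1mx mulVmx. Qed.

Lemma der1_Z : [~: [set: T], [set: T]]%g \subset Zset.
Proof.
rewrite gen_subG; apply/subsetP=> _ /imset2P[x y _ _ ->].
rewrite inE valR.
have hx : (val x).1 \in Q8 a b by rewrite -(QsetE hab); exact: (valP x).
have hy : (val y).1 \in Q8 a b by rewrite -(QsetE hab); exact: (valP y).
have uy := Q8unit hab hy.
have ux := Q8unit hab hx.
case: (Q8comm hx hy) => ->; rewrite ?mulmxN invQP //.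
  by rewrite eqxx.
by rewrite eqxx orbT.
Qed.

Lemma der2_N : [~: Zset, Zset]%g \subset Nset.
Proof.
rewrite gen_subG; apply/subsetP=> _ /imset2P[x y hx hy ->].
rewrite inE valR.
have hc : (val x).1 *m (val y).1 = (val y).1 *m (val x).1.
  by move: hx hy; rewrite !inE => /orP[]/eqP-> /orP[]/eqP->;
     rewrite ?mul1mx ?mulmx1 ?mulNmx ?mulmxN.
have uy := QsetU (valP y); have ux := QsetU (valP x).
by rewrite hc invQP.
Qed.

Lemma N_abelian : abelian Nset.
Proof.
apply/centsP => x hx y hy; apply: val_inj.
move: hx hy; rewrite !inE => /eqP ex /eqP ey.
by rewrite !valM ex ey !mul1mx addrC.
Qed.

Lemma T_sol : solvable [set: T].
Proof.
have s1 : ([set: T]^`(1) \subset Zset)%g by rewrite derg1; exact: der1_Z.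
have s2 : ([set: T]^`(2) \subset Nset)%g.
  by rewrite dergSn; apply: subset_trans (commgSS s1 s1) der2_N.
have s3 : ([set: T]^`(3) \subset [1 T])%g.
  by rewrite dergSn; apply: subset_trans (commgSS s2 s2) _; rewrite (commG1P N_abelian).
by apply/derivedP; exists 3%N; apply/trivgP.
Qed.

End Props.

HB.instance Definition _ (F : finFieldType) := Finite.on (Cn F).

Section Final.
Variable F : finFieldType.
Variables a b : F.
Hypothesis hab : a ^+ 2 + b ^+ 2 = -1.
Hypothesis h2 : (2 : F) != 0.
Hypothesis hnat : forall x : F, exists n : nat, x = n%:R.

Local Notation T := (T a b).
Local Notation Mset := (@Mset F a b).
Local Notation Nset := (@Nset F a b).

Definition MG (nw : Cn F * 'cV[F]_2) : {group T} := @Mgrp F a b (vec nw.1) nw.2.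
Definition C0 : {set {group T}} := (@Ngrp F a b) |: [set MG nw | nw : Cn F * 'cV[F]_2].

Lemma MG_inj : injective MG.
Proof.
move=> [n w] [n' w'] e.
have e' : Mset (vec n) w = Mset (vec n') w' by move: (congr1 val e).
by have [-> ->] := Minj hab h2 e'.
Qed.

Lemma C0_card : #|C0| = (1 + #|{: Cn F}| * #|'cV[F]_2|)%N.
Proof.
rewrite cardsU1 card_imset; last exact: MG_inj.
rewrite card_prod.
suff -> : (@Ngrp F a b) \notin [set MG nw | nw : Cn F * 'cV[F]_2] by [].
apply/imsetP => -[[n w] _ e].
have : Nset = Mset (vec n) w by move: (congr1 val e).
by apply/eqP; exact: N_neq_M.
Qed.

Lemma C0_cov : two_covering [set: T]%G C0.
Proof.
split.
  move=> H; rewrite !inE => /orP[/eqP->|/imsetP[[n w] _ ->]]; rewrite properT.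
    exact: N_proper.
  exact: M_proper.
move=> x y _ _.
case: (cover hab h2 x y) => [[hx hy]|[n [w [hx hy]]]].
  by exists (@Ngrp F a b); rewrite ?setU11 // hx hy.
exists (MG (n, w)); last by rewrite hx hy.
by rewrite !inE; apply/orP; right; apply/imsetP; exists (n, w).
Qed.

Definition Pl (l : option (Cn F * 'cV[F]_2)) : T * T :=
  match l with None => (x0 a b, y0 a b) | Some nw => pairM hab nw.1 nw.2 end.

Lemma pair_unique nw c w : c != 0 ->
  (pairM hab nw.1 nw.2).1 \in Mset c w -> (pairM hab nw.1 nw.2).2 \in Mset c w ->
  Mset c w = Mset (vec nw.1) nw.2.
Proof.
move=> c0 h1 h2'; have [k [ck wk]] := UQ h2 h1 h2'.
have k0 : k != 0 by apply: contraNneq c0 => k0; rewrite ck k0 scale0r.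
by rewrite ck wk Mset_scale.
Qed.

Lemma gen_pairs (K : {group T}) l1 l2 : K \proper [set: T] ->
  (Pl l1).1 \in K -> (Pl l1).2 \in K -> (Pl l2).1 \in K -> (Pl l2).2 \in K -> l1 = l2.
Proof.
move=> hK.
have hmax : forall nw, (pairM hab nw.1 nw.2).1 \in K -> (pairM hab nw.1 nw.2).2 \in K ->
    exists c w, c != 0 /\ K \subset Mset c w.
  move=> nw hx hy; case: (maxK hab h2 hnat hx hy erefl erefl) => // hKT.
  by move: hK; rewrite properT hKT eqxx.
case: l1 => [nw1|]; case: l2 => [nw2|] //= h1 h2' h3 h4.
- have [c [w [c0 sK]]] := hmax nw1 h1 h2'.
  have e1 := pair_unique c0 (subsetP sK _ h1) (subsetP sK _ h2').
  have e2 := pair_unique c0 (subsetP sK _ h3) (subsetP sK _ h4).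
  rewrite e1 in e2; have [] := Minj hab h2 e2.
  by case: nw1 {h1 h2' e1 e2} => ? ?; case: nw2 {h3 h4} => ? ? /= -> ->.
- have [c [w [c0 sK]]] := hmax nw1 h1 h2'.
  by move: c0; rewrite (pair0 (subsetP sK _ h3) (subsetP sK _ h4)) eqxx.
- have [c [w [c0 sK]]] := hmax nw2 h3 h4.
  by move: c0; rewrite (pair0 (subsetP sK _ h1) (subsetP sK _ h2')) eqxx.
Qed.

Lemma C_min (C : {set {group T}}) : two_covering [set: T]%G C ->
  (1 + #|{: Cn F}| * #|'cV[F]_2| <= #|C|)%N.
Proof.
move=> [hprop hcov].
pose f l := odflt 1%G [pick H in C | ((Pl l).1 \in H) && ((Pl l).2 \in H)].
have hf : forall l, [/\ f l \in C, (Pl l).1 \in f l & (Pl l).2 \in f l].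
  move=> l; rewrite /f; case: pickP => [H /andP[hH /andP[h1 h2']] | hn] /=.
    by split.
  have [H hH /andP[h1 h2']] := hcov (Pl l).1 (Pl l).2 (in_setT _) (in_setT _).
  by move: (hn H); rewrite hH h1 h2'.
have finj : injective f.
  move=> l1 l2 e; have [hC1 a1 b1] := hf l1; have [_ a2 b2] := hf l2.
  rewrite -e in a2 b2.
  exact: (gen_pairs (hprop _ hC1) a1 b1 a2 b2).
have := subset_leq_card (_ : f @: [set: option (Cn F * 'cV[F]_2)] \subset C).
rewrite card_imset // cardsT card_option card_prod add1n; apply.
by apply/subsetP => _ /imsetP[l _ ->]; case: (hf l).
Qed.

Theorem main_gen : solvable [set: T]%G /\ sigma2_is [set: T]%G (1 + #|{: Cn F}| * #|'cV[F]_2|).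
Proof.
split; first exact: T_sol.
split; first by exists C0; split; [exact: C0_cov | exact: C0_card].
exact: C_min.
Qed.

End Final.

Lemma two_squares (F : finFieldType) : odd #|F| -> exists a b : F, a ^+ 2 + b ^+ 2 = -1.
Proof.
move=> hodd.
set S1 := [set x ^+ 2 | x : F].
set S2 := [set -1 - s | s in S1].
have c2 : #|S2| = #|S1|.
  by apply: card_imset => s t /eqP; rewrite (inj_eq (addrI _)) (inj_eq oppr_inj) => /eqP.
have hle : (#|F| <= #|S1| * 2)%N.
  pose sg (x : F) := (enum_rank x < enum_rank (- x))%N.
  pose h (x : F) := (x ^+ 2, sg x).
  have hinj : injective h.
    move=> x y [e1 e2].
    have : (x - y) * (x + y) == 0 by rewrite -subr_sqr e1 subrr.
    rewrite mulf_eq0 => /orP[/eqP/subr0_eq //|/eqP hxy].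
    have ey : y = - x by rewrite -(addKr x y) hxy addr0.
    have [exx|nxx] := eqVneq x (- x); first by rewrite ey -exx.
    move: e2; rewrite /sg ey opprK.
    have : enum_rank x != enum_rank (- x) by rewrite (inj_eq enum_rank_inj).
    move=> hne; case: ltngtP => // /val_inj e; by rewrite e eqxx in hne.
  rewrite -cardsT -(card_imset [set: F] hinj).
  have <- : #|setX S1 [set: bool]| = (#|S1| * 2)%N by rewrite cardsX cardsT card_bool.
  apply: subset_leq_card.
  by apply/subsetP => _ /imsetP[x _ ->]; rewrite !inE /= andbT; apply/imsetP; exists x.
have hlt : (#|F| < #|S1| + #|S2|)%N.
  rewrite c2 addnn -mul2n ltn_neqAle mulnC hle andbT.
  by apply/negP => /eqP e; move: hodd; rewrite e oddM andbF.
have : (0 < #|S1 :&: S2|)%N.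
  have := cardsUI S1 S2; have := max_card (S1 :|: S2).
  move=> hm hu; rewrite lt0n; apply/negP => /eqP h0; move: hu; rewrite h0 addn0 => hu.
  by move: hlt; rewrite -hu => /leq_trans /(_ hm); rewrite ltnn.
case/card_gt0P => s; rewrite inE => /andP[/imsetP[x _ ->] /imsetP[t /imsetP[y _ ->] e]].
by exists x, y; rewrite e subrK.
Qed.

Lemma Fp_two (p : nat) : prime p -> odd p -> (2 : 'F_p) != 0.
Proof.
move=> hp hodd; rewrite -(dvdn_pcharf (pchar_Fp hp)).
apply/negP => /(dvdn_leq (isT : (0 < 2)%N)) hle.
have := prime_gt1 hp => hgt.
have e : p = 2%N by apply/eqP; rewrite eqn_leq hle hgt.
by rewrite e in hodd.
Qed.

Lemma Fp_nat (p : nat) (x : 'F_p) : exists n : nat, x = n%:R.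
Proof. by exists x; rewrite natr_Zp. Qed.

Local Close Scope ring_scope.

Theorem theorem1 (p : nat) (hp : prime p) (hodd : odd p) :
  exists (gT : finGroupType) (G : {group gT}),
    solvable G /\ sigma2_is G (1 + p ^ 2 + p ^ 3 + p ^ 4).
Proof.
have [a [b hab]] : exists a b : 'F_p, (a ^+ 2 + b ^+ 2 = -1)%R by apply: two_squares; rewrite card_Fp.
exists (T a b), [set: T a b]%G.
have [hs hsig] := main_gen hab (Fp_two hp hodd) (@Fp_nat p).
split => //.
suff -> : (1 + p ^ 2 + p ^ 3 + p ^ 4 = 1 + #|{: Cn 'F_p}| * #|'cV['F_p]_2|)%N by [].
rewrite card_option card_sum card_prod card_mx card_Fp //.
ring.
Qed.
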